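(* For all integers $0\le t\le n$ with $n\ge1$, the exact-$t$ function $f^{=}_{t,n}:\{0,1\}^n\to\{0,1\}$, defined by $f^{=}_{t,n}(x)=1$ if $\sum_{i=1}^n x_i=t$ and $f^{=}_{t,n}(x)=0$ otherwise, has a quadratization using $\lfloor n/2\rfloor$ auxiliary variables.
   Context: A quadratization of $f:\{0,1\}^n\to\mathbb{R}$ using $m$ auxiliary variables is a polynomial $g(x,y)$ of degree at most $2$ in $x_1,\ldots,x_n,y_1,\ldots,y_m$ such that $f(x)=\min\{g(x,y):y\in\{0,1\}^m\}$ for all $x\in\{0,1\}^n$. *)

(* Defs.v *)
From HB Require Import structures.
From mathcomp Require Import all_boot all_order all_algebra.
Set Implicit Arguments. Unset Strict Implicit. Unset Printing Implicit Defensive.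
Import Order.TTheory GRing.Theory Num.Theory.
Local Open Scope ring_scope.

(* Boolean points {0,1}^k are finite functions 'I_k -> bool; a bit b is read
   as the number b%:R (0 or 1). *)

Definition quad_eval (R : nzRingType) (k : nat) (c : R) (a : 'I_k -> R)
  (b : 'I_k -> 'I_k -> R) (z : 'I_k -> R) : R :=
  c + \sum_(i < k) a i * z i + \sum_(i < k) \sum_(j < k) b i j * z i * z j.

Definition join_pt (R : nzRingType) (n m : nat) (x : {ffun 'I_n -> bool})
  (y : {ffun 'I_m -> bool}) : 'I_(n + m) -> R :=
  fun i => match split i with
           | inl i' => (x i')%:R
           | inr j' => (y j')%:R
           end.

(* g is a quadratization of f with m auxiliary variables:
   f(x) = min_{y in {0,1}^m} g(x,y) for all x in {0,1}^n. *)
Definition is_quadratization (R : realFieldType) (n m : nat)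
  (f : {ffun 'I_n -> bool} -> R) (c : R) (a : 'I_(n + m) -> R)
  (b : 'I_(n + m) -> 'I_(n + m) -> R) : Prop :=
  forall x : {ffun 'I_n -> bool},
    (forall y : {ffun 'I_m -> bool}, f x <= quad_eval c a b (join_pt R x y)) /\
    (exists y : {ffun 'I_m -> bool}, quad_eval c a b (join_pt R x y) = f x).

Definition has_quadratization (R : realFieldType) (n m : nat)
  (f : {ffun 'I_n -> bool} -> R) : Prop :=
  exists c a b, @is_quadratization R n m f c a b.

Definition exact_fun (R : nzRingType) (t n : nat) (x : {ffun 'I_n -> bool}) : R :=
  if (\sum_(i < n) (x i : nat))%N == t then 1 else 0.

(* Main.v *)
Require Import Defs.
From HB Require Import structures.
From mathcomp Require Import all_boot all_order all_algebra.
From mathcomp Require Import zify ring lra.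
Set Implicit Arguments. Unset Strict Implicit. Unset Printing Implicit Defensive.
Import Order.TTheory GRing.Theory Num.Theory.

Section Q.
Local Open Scope ring_scope.
Variable R : realFieldType.
Variable k : nat.
Definition quadlike (F : ('I_k -> R) -> R) :=
  exists c a b, forall z, F z = quad_eval c a b z.
Definition afflike (F : ('I_k -> R) -> R) :=
  exists l0 (l : 'I_k -> R), forall z, F z = l0 + \sum_(i < k) l i * z i.

Lemma quad_add F G : quadlike F -> quadlike G -> quadlike (fun z => F z + G z).
Proof.
case=> c1 [a1 [b1 H1]] [c2 [a2 [b2 H2]]].
exists (c1 + c2), (fun i => a1 i + a2 i), (fun i j => b1 i j + b2 i j) => z.
rewrite H1 H2 /quad_eval.
have E1 : \sum_(i < k) (a1 i + a2 i) * z i = \sum_(i < k) a1 i * z i + \sum_(i < k) a2 i * z i.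
  by rewrite -big_split; apply eq_bigr => i _; rewrite mulrDl.
have E2 : \sum_(i < k) \sum_(j < k) (b1 i j + b2 i j) * z i * z j =
  \sum_(i < k) \sum_(j < k) b1 i j * z i * z j + \sum_(i < k) \sum_(j < k) b2 i j * z i * z j.
  rewrite -big_split; apply eq_bigr => i _; rewrite -big_split; apply eq_bigr => j _.
  by rewrite !mulrDl.
rewrite E1 E2; ring.
Qed.

Lemma quad_scale (r : R) F : quadlike F -> quadlike (fun z => r * F z).
Proof.
case=> c [a [b H]]; exists (r * c), (fun i => r * a i), (fun i j => r * b i j) => z.
rewrite H /quad_eval !mulrDr mulr_sumr; congr (_ + _ + _).
  by apply eq_bigr => i _; rewrite mulrA.
rewrite mulr_sumr; apply eq_bigr => i _; rewrite mulr_sumr; apply eq_bigr => j _.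
by rewrite !mulrA.
Qed.

Lemma quad_const (r : R) : quadlike (fun _ => r).
Proof.
exists r, (fun _ => 0), (fun _ _ => 0) => z.
rewrite /quad_eval big1 ?big1 ?addr0 // => i _; first by rewrite big1 // => j _; rewrite !mul0r.
by rewrite mul0r.
Qed.

Lemma quad_mul F G : afflike F -> afflike G -> quadlike (fun z => F z * G z).
Proof.
case=> f0 [f Hf] [g0 [g Hg]].
exists (f0 * g0), (fun i => f0 * g i + g0 * f i), (fun i j => f i * g j) => z.
rewrite Hf Hg /quad_eval.
have E1 : \sum_(i < k) (f0 * g i + g0 * f i) * z i =
   f0 * \sum_(i < k) g i * z i + g0 * \sum_(i < k) f i * z i.
  rewrite !mulr_sumr -big_split; apply eq_bigr => i _ /=; ring.
have E2 : \sum_(i < k) \sum_(j < k) f i * g j * z i * z j =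
   (\sum_(i < k) f i * z i) * (\sum_(j < k) g j * z j).
  rewrite mulr_suml; apply eq_bigr => i _; rewrite mulr_sumr; apply eq_bigr => j _; ring.
rewrite E1 E2; ring.
Qed.

Lemma aff_add F G : afflike F -> afflike G -> afflike (fun z => F z + G z).
Proof.
case=> f0 [f Hf] [g0 [g Hg]]; exists (f0 + g0), (fun i => f i + g i) => z.
rewrite Hf Hg.
have -> : \sum_(i < k) (f i + g i) * z i = \sum_(i < k) f i * z i + \sum_(i < k) g i * z i.
  by rewrite -big_split; apply eq_bigr => i _; rewrite mulrDl.
ring.
Qed.

Lemma aff_scale (r : R) F : afflike F -> afflike (fun z => r * F z).
Proof.
case=> f0 [f Hf]; exists (r * f0), (fun i => r * f i) => z.
rewrite Hf mulrDr mulr_sumr; congr (_ + _); apply eq_bigr => i _; by rewrite mulrA.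
Qed.

Lemma aff_const (r : R) : afflike (fun _ => r).
Proof. exists r, (fun _ => 0) => z; rewrite big1 ?addr0 // => i _; by rewrite mul0r. Qed.

Lemma aff_lin (l : 'I_k -> R) : afflike (fun z => \sum_(i < k) l i * z i).
Proof. by exists 0, l => z; rewrite add0r. Qed.

Lemma aff_quad F : afflike F -> quadlike F.
Proof.
move=> H; have := quad_mul H (aff_const 1).
by case=> c [a [b E]]; exists c, a, b => z; rewrite -E mulr1.
Qed.
End Q.
Section C.
Local Open Scope ring_scope.
Variable R : realFieldType.
Definition gval (s t k1 k2 : nat) (Y : R) : R :=
  let D := s%:R - t%:R - 3/2 - 2 * k1%:R + 3 * Y + 2 * k2%:R in
  1/2 * (D * D) + (-1/8) + 2 * (Y * k1%:R + k2%:R + (-1) * (Y * k2%:R)).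

Lemma natR_le (a b : nat) : (a <= b)%N -> (a%:R <= b%:R :> R).
Proof. by rewrite ler_nat. Qed.

Lemma core (s t k1 k2 : nat) (Y : R) : Y = 0 \/ Y = 1 ->
  0 <= gval s t k1 k2 Y /\ (s = t -> 1 <= gval s t k1 k2 Y).
Proof.
rewrite /gval => -[->|->].
- case: k2 => [|k2].
  + have [H|H] := leqP (t + 2 * k1 + 2) s.
    * have := natR_le H; rewrite !natrD ?natrM ?addr0 => H'.
      split; first nra. move=> E; subst s; lia.
    * have : (s + 1 <= t + 2 * k1 + 2)%N by lia.
      move/natR_le; rewrite !natrD ?natrM ?addr0 => H'.
      split; first nra. move=> E; subst s.
      have := natR_le (leq0n k1) => H0. nra.
  + have H0 := natR_le (leq0n k1); have H1 := natR_le (leq0n k2).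
    rewrite -[k2.+1]addn1 natrD.
    match goal with |- context[?D * ?D] => have HD : 0 <= D * D by rewrite -expr2 sqr_ge0 end.
    split; [nra| move=> _; nra].
- case: k1 => [|k1].
  + have [H|H] := leqP (s + 2 * k2 + 2) t.
    * have := natR_le H; rewrite !natrD ?natrM ?addr0 => H'.
      split; first nra. move=> E; subst s; lia.
    * have : (t <= s + 2 * k2 + 1)%N by lia.
      move/natR_le; rewrite !natrD ?natrM ?addr0 => H'.
      split; first nra. move=> E; subst s.
      have := natR_le (leq0n k2) => H0. nra.
  + have H0 := natR_le (leq0n k1); have H1 := natR_le (leq0n k2).
    rewrite -[k1.+1]addn1 natrD.
    match goal with |- context[?D * ?D] => have HD : 0 <= D * D by rewrite -expr2 sqr_ge0 end.
    split; [nra| move=> _; nra].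
Qed.
Lemma L1 t (Y : R) : Y = 0 \/ Y = 1 -> gval t t 0 0 Y = 1.
Proof. by rewrite /gval => -[->|->]; rewrite ?mulr0 ?mul0r; field. Qed.
Lemma L2 s t k1 r : (r <= 1)%N -> s = (t + 1 + 2 * k1 + r)%N -> gval s t k1 0 0 = 0.
Proof.
move=> hr ->; rewrite /gval !natrD ?natrM ?addr0.
by case: r hr => [|[|]] // _; field.
Qed.
Lemma L3 s t k2 r : (r <= 1)%N -> t = (s + 1 + 2 * k2 + r)%N -> gval s t 0 k2 1 = 0.
Proof.
move=> hr ->; rewrite /gval !natrD ?natrM ?addr0.
by case: r hr => [|[|]] // _; field.
Qed.
End C.
Section E.
Local Open Scope ring_scope.
Variable R : realFieldType.
Variables n m : nat.
Definition wS (i : 'I_(n + m)) : R := if split i is inl _ then 1 else 0.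
Definition wR (a b : nat) (i : 'I_(n + m)) : R :=
  if split i is inr j then (((a <= j) && (j < b))%N : nat)%:R else 0.

Lemma split_l (i : 'I_n) : split (lshift m i) = inl i.
Proof. exact: (unsplitK (inl i)). Qed.
Lemma split_r (j : 'I_m) : split (rshift n j) = inr j.
Proof. exact: (unsplitK (inr j)). Qed.

Lemma evalS x y : \sum_(i < n + m) wS i * join_pt R x y i = ((\sum_(i < n) (x i : nat))%N)%:R.
Proof.
rewrite big_split_ord /= [X in _ + X]big1 ?addr0; last first.
  by move=> j _; rewrite /wS split_r mul0r.
rewrite natr_sum; apply eq_bigr => i _; by rewrite /wS /join_pt split_l mul1r.
Qed.

Lemma evalR a b x y : \sum_(i < n + m) wR a b i * join_pt R x y i =
  ((\sum_(j < m) (((a <= j) && (j < b)) && y j : nat))%N)%:R.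
Proof.
rewrite big_split_ord /= big1 ?add0r; last first.
  by move=> j _; rewrite /wR split_l mul0r.
rewrite natr_sum; apply eq_bigr => j _; rewrite /wR /join_pt split_r.
by case: ((a <= j) && (j < b))%N; case: (y j); rewrite ?mul1r ?mul0r ?mulr1.
Qed.
End E.

Lemma cnt (a b m : nat) : (a <= b)%N -> (\sum_(j < m) ((a <= j < b) : nat) = minn b m - minn a m)%N.
Proof. move=> ab; elim: m => [|m IH]; first by rewrite big_ord0 !minn0.
rewrite big_ord_recr /= IH. case: (leqP a m); case: (ltnP m b) => /= *; lia. Qed.

Lemma cntle (a b m : nat) (y : {ffun 'I_m -> bool}) : (a <= b)%N ->
  (\sum_(j < m) (((a <= j < b) && y j) : nat) <= minn b m - minn a m)%N.
Proof.
move=> ab; rewrite -cnt //; apply: leq_sum => j _.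
by case: (a <= j < b)%N; case: (y j).
Qed.

Section Q2.
Local Open Scope ring_scope.
Variable R : realFieldType.
Variable k : nat.
Lemma aff_ext (F G : ('I_k -> R) -> R) : (forall z, F z = G z) -> afflike G -> afflike F.
Proof. by move=> E [l0 [l H]]; exists l0, l => z; rewrite E H. Qed.
Lemma quad_ext (F G : ('I_k -> R) -> R) : (forall z, F z = G z) -> quadlike G -> quadlike F.
Proof. by move=> E [c [a [b H]]]; exists c, a, b => z; rewrite E H. Qed.
End Q2.

Section Main.
Local Open Scope ring_scope.
Variable R : realFieldType.

Lemma main_R (n t : nat) :
  (1 <= n)%N -> (t <= n)%N ->
  has_quadratization (n %/ 2) (exact_fun R t (n:=n)).
Proof.
move=> n1 tn.
set m := (n %/ 2)%N.
set u : nat := ((0 < t) && (t < n))%N.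
set e0 : R := ((t == n) : nat)%:R.
set p1 := ((n - t - 1) %/ 2)%N.
set p2 := ((t - 1) %/ 2)%N.
have hsz : (u + p1 + p2 <= m)%N by rewrite /u /p1 /p2 /m; lia.
pose S := fun z : 'I_(n + m) -> R => \sum_(i < n + m) @wS R n m i * z i.
pose N := fun (a b : nat) (z : 'I_(n + m) -> R) => \sum_(i < n + m) @wR R n m a b i * z i.
pose Y := fun z => e0 + N 0%N u z.
pose K1 := N u (u + p1)%N.
pose K2 := N (u + p1)%N (u + p1 + p2)%N.
pose D := fun z => S z - t%:R - 3/2 - 2 * K1 z + 3 * Y z + 2 * K2 z.
pose G := fun z => 1/2 * (D z * D z) + (-1/8) + 2 * (Y z * K1 z + K2 z + (-1) * (Y z * K2 z)).
have aS : afflike S by apply: aff_lin.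
have aN : forall a b, afflike (N a b) by move=> a b; apply: aff_lin.
have aY : afflike Y := aff_add (aff_const _ e0) (aN _ _).
have aD : afflike D.
  have := aff_add aS (aff_add (aff_const _ (- t%:R - 3/2))
     (aff_add (aff_scale (-2) (aN u (u + p1)%N))
      (aff_add (aff_scale 3 aY) (aff_scale 2 (aN (u + p1)%N (u + p1 + p2)%N))))).
  apply: aff_ext => z; rewrite /D /K1 /K2 /=; ring.
have qG : quadlike G.
  have := quad_add (quad_add (quad_scale (1/2) (quad_mul aD aD)) (quad_const _ (-1/8)))
    (quad_scale 2 (quad_add (quad_add (quad_mul aY (aN u (u + p1)%N))
         (aff_quad (aN (u + p1)%N (u + p1 + p2)%N)))
       (quad_scale (-1) (quad_mul aY (aN (u + p1)%N (u + p1 + p2)%N))))).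
  by apply: quad_ext => z.
have [c [a [b HG]]] := qG.
exists c, a, b => x.
set s := (\sum_(i < n) (x i : nat))%N.
have sn : (s <= n)%N.
  have : (s <= \sum_(i < n) 1)%N by apply: leq_sum => i _; exact: leq_b1.
  by rewrite sum1_card card_ord.
pose cN a b (y : {ffun 'I_m -> bool}) := (\sum_(j < m) (((a <= j < b) && y j) : nat))%N.
have Gj : forall y, quad_eval c a b (join_pt R x y) =
    gval s t (cN u (u + p1) y) (cN (u + p1) (u + p1 + p2) y) (e0 + (cN 0 u y)%:R).
  move=> y; rewrite -HG /G /D /Y /K1 /K2 /N /S evalS !evalR //.
have fval : exact_fun R t x = if s == t then 1 else 0 by [].
split.
- move=> y; rewrite Gj fval.
  have HY : e0 + (cN 0%N u y)%:R = 0 \/ e0 + (cN 0%N u y)%:R = 1.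
    have := cntle y (leq0n u); rewrite -/(cN 0%N u y) => Hc.
    rewrite /e0; case: eqP => [E|NE].
    + have -> : cN 0%N u y = 0%N by move: Hc; rewrite /u E ltnn andbF; lia.
      by right; rewrite /= addr0.
    + rewrite add0r; have : (cN 0%N u y <= 1)%N by move: Hc; rewrite /u; lia.
      by case: (cN 0%N u y) => [|[|]] //= _; [left|right].
  have := core s t (cN u (u + p1) y) (cN (u + p1) (u + p1 + p2) y) HY.
  by case: eqP => [E|_] [H1 H2] //; apply: H2.
- pose yc (b0 : bool) (k1 k2 : nat) : {ffun 'I_m -> bool} :=
    [ffun j : 'I_m => ((j < u) && b0) || ((u <= j) && (j < u + k1))
                      || ((u + p1 <= j) && (j < u + p1 + k2))]%N.
  have cnts : forall b0 k1 k2, (k1 <= p1)%N -> (k2 <= p2)%N ->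
     [/\ cN 0%N u (yc b0 k1 k2) = (u * b0)%N, cN u (u + p1)%N (yc b0 k1 k2) = k1
       & cN (u + p1)%N (u + p1 + p2)%N (yc b0 k1 k2) = k2].
    move=> b0 k1 k2 h1 h2; split.
    + rewrite /cN (eq_bigr (fun j : 'I_m => ((0 <= j < u * b0)%N : nat))); last first.
        by move=> j _; rewrite ffunE; congr nat_of_bool; lia.
      rewrite cnt //; lia.
    + rewrite /cN (eq_bigr (fun j : 'I_m => ((u <= j < u + k1)%N : nat))); last first.
        by move=> j _; rewrite ffunE; congr nat_of_bool; lia.
      rewrite cnt //; lia.
    + rewrite /cN (eq_bigr (fun j : 'I_m => ((u + p1 <= j < u + p1 + k2)%N : nat))); last first.
        by move=> j _; rewrite ffunE; congr nat_of_bool; lia.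
      rewrite cnt //; lia.
  rewrite fval.
  have [lt_st|lt_ts|eq_st] := ltngtP s t.
  + have [c0 c1 c2] := cnts true 0%N ((t - 1 - s) %/ 2)%N (leq0n _) (ltac:(rewrite /p2; lia)).
    exists (yc true 0%N ((t - 1 - s) %/ 2)%N); rewrite Gj c0 c1 c2.
    have -> : e0 + (u * true)%N%:R = 1.
      rewrite /e0 /u muln1; case: eqP => E.
        by rewrite E ltnn andbF /= addr0.
      have -> : (0 < t < n)%N by lia.
      by rewrite /= add0r.
    apply: (@L3 R s t _ ((t - 1 - s) %% 2)%N); lia.
  + have [c0 c1 c2] := cnts false ((s - t - 1) %/ 2)%N 0%N (ltac:(rewrite /p1; lia)) (leq0n _).
    exists (yc false ((s - t - 1) %/ 2)%N 0%N); rewrite Gj c0 c1 c2.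
    have -> : e0 + (u * false)%N%:R = 0.
      rewrite /e0 muln0 addr0; have -> : (t == n) = false by apply/negbTE; lia.
      by [].
    apply: (@L2 R s t _ ((s - t - 1) %% 2)%N); lia.
  + have [c0 c1 c2] := cnts false 0%N 0%N (leq0n _) (leq0n _).
    exists (yc false 0%N 0%N); rewrite Gj c0 c1 c2 eq_st muln0 addr0.
    apply: L1; rewrite /e0; case: (t == n); [right|left]; by [].
Qed.
End Main.

Theorem corollary4 (R : realFieldType) (n t : nat) :
  (1 <= n)%N -> (t <= n)%N ->
  has_quadratization (n %/ 2) (exact_fun R t (n:=n)).
Proof. exact: main_R. Qed.
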